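(* Let $V$ be a finite-dimensional real vector space with a metric $\mu$, let $\Phi'$ be a finite set of increasing filtrations on $V$ which has a compatible splitting, and let $\Phi\subset\Phi'$. Assume that $\mu$ gives compatible splittings of $\Phi$. Then there exists $g\in\mathrm{Aut}(V)$ such that $g(W_k)=W_k$ for all $W\in\Phi$ and all $k$, and such that $\mu$ gives compatible splittings of $g\Phi'=\{gW : W\in\Phi'\}$, where $(gW)_k:=g(W_k)$.
   Context: A metric on $V$ is a positive definite symmetric bilinear form. Filtrations $W=(W_k)_{k\in\mathbb Z}$ are increasing, with $W_k=0$ for $k\ll0$ and $W_k=V$ for $k\gg0$. Given a splitting of each $W$ in a finite set $\Phi$ of filtrations, these splittings are called compatible if there is a direct sum decomposition $V=\bigoplus_{w\in\mathbb Z^\Phi}V[w]$ such that for every $W\in\Phi$ and $k\in\mathbb Z$ the weight-$k$ part of the splitting of $W$ equals $\bigoplus_{w(W)=k}V[w]$; $\Phi$ ''has a compatible splitting'' if such splittings exist. A metric $\mu$ gives, for each $W$, the orthogonal splitting $V=\bigoplus_k V^W_k$ with $V^W_k$ the $\mu$-orthogonal complement of $W_{k-1}$ in $W_k$; ''$\mu$ gives compatible splittings of $\Phi$'' means these orthogonal splittings are compatible. *)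

(* Defs.v *)
From HB Require Import structures.
From mathcomp Require Import all_boot all_order all_algebra.
From mathcomp Require Import reals.
Set Implicit Arguments. Unset Strict Implicit. Unset Printing Implicit Defensive.
Import Order.TTheory GRing.Theory Num.Theory.
Local Open Scope ring_scope.

Section Defs.
Variables (R : realType) (V : vectType R).

Definition is_metric (mu : V -> V -> R) : Prop :=
  [/\ (forall (a : R) (u v w : V), mu (a *: u + v) w = a * mu u w + mu v w),
      (forall u v : V, mu u v = mu v u) &
      (forall v : V, v != 0 -> 0 < mu v v)].

Definition is_filtration (W : int -> {vspace V}) : Prop :=
  [/\ (forall k : int, (W k <= W (k + 1)%R)%VS),
      (exists a : int, forall k : int, k <= a -> W k = 0%VS) &
      (exists b : int, forall k : int, b <= k -> W k = fullv)].

(* A decomposition V = (+)_{w in Z^I} V[w] (finitely many nonzero summands,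
   listed in ws) such that, for every filtration W_i with i in Phi, the
   induced splitting V^{W_i}_k := (+)_{w(i)=k} V[w] is a splitting of W_i,
   i.e. W_i k = (+)_{j <= k} V^{W_i}_j = (+)_{w(i) <= k} V[w]. *)
Definition compatible_decomp (I : finType) (Phi : {set I})
    (W : I -> int -> {vspace V})
    (ws : seq {ffun I -> int}) (Vw : {ffun I -> int} -> {vspace V}) : Prop :=
  [/\ uniq ws,
      directv (\sum_(w <- ws) Vw w),
      (\sum_(w <- ws) Vw w)%VS = fullv &
      (forall i, i \in Phi -> forall k : int,
          W i k = (\sum_(w <- ws | (w i <= k)%R) Vw w)%VS)].

Definition has_compatible_splitting (I : finType) (Phi : {set I})
    (W : I -> int -> {vspace V}) : Prop :=
  exists ws Vw, compatible_decomp Phi W ws Vw.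

Definition in_orth_piece (mu : V -> V -> R) (W : int -> {vspace V})
    (k : int) (v : V) : Prop :=
  v \in W k /\ (forall u, u \in W (k - 1) -> mu v u = 0).

Definition gives_compatible_splittings (mu : V -> V -> R) (I : finType)
    (Phi : {set I}) (W : I -> int -> {vspace V}) : Prop :=
  exists ws Vw, compatible_decomp Phi W ws Vw /\
    (forall i, i \in Phi -> forall (k : int) (v : V),
       v \in (\sum_(w <- ws | w i == k) Vw w)%VS <-> in_orth_piece mu (W i) k v).

End Defs.

(* Main.v *)
Require Import Defs.
From HB Require Import structures.
From mathcomp Require Import all_boot all_order all_algebra.
From mathcomp Require Import reals.
From mathcomp Require Import zify.
Import Order.TTheory GRing.Theory Num.Theory.
Local Open Scope ring_scope.

Module Aux.
Set Implicit Arguments. Unset Strict Implicit. Unset Printing Implicit Defensive.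

Section Decomp.
Variables (K : fieldType) (V : vectType K) (n : nat) (Vs : 'I_n -> {vspace V}).
Hypothesis dir : directv (\sum_i Vs i).
Hypothesis full : (\sum_i Vs i)%VS = fullv.

Definition dcomp (i : 'I_n) : 'End(V) := sumv_pi_for (erefl (\sum_i Vs i)%VS) i.

Lemma dcomp_mem i x : dcomp i x \in Vs i.
Proof. exact: memv_sum_pi. Qed.

Lemma dcomp_sum x : \sum_i dcomp i x = x.
Proof. by apply: sumv_pi_sum; rewrite full memvf. Qed.

Lemma dcomp_unique (xs : 'I_n -> V) j :
  (forall i, xs i \in Vs i) -> dcomp j (\sum_i xs i) = xs j.
Proof.
move=> Hx; set x := \sum_i xs i.
have := (directv_sum_unique dir) (fun i => dcomp i x) xs.
rewrite dcomp_sum eqxx => /(_ (fun i _ => dcomp_mem i x) (fun i _ => Hx i)).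
by move=> /esym /forall_inP /(_ j isT) /eqP.
Qed.

Lemma dcomp_mem_sum (P : pred 'I_n) x :
  reflect (forall i, ~~ P i -> dcomp i x = 0) (x \in (\sum_(i | P i) Vs i)%VS).
Proof.
apply: (iffP idP).
  case/memv_sumP=> xs Hxs ->{x} i nPi.
  have -> : \sum_(i | P i) xs i = \sum_i (if P i then xs i else 0).
    by rewrite big_mkcond.
  rewrite dcomp_unique ?(negPf nPi) // => j; case: ifP => Pj; last exact: mem0v.
  exact: Hxs.
move=> H; rewrite -(dcomp_sum x) (bigID P) /= [X in _ + X]big1 ?addr0.
  by apply: memv_sumr => i _; apply: dcomp_mem.
by move=> i /H.
Qed.

Lemma dcomp_id j x : x \in Vs j -> dcomp j x = x /\ forall i, i != j -> dcomp i x = 0.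
Proof.
move=> Hx.
have Hs : x = \sum_i (if i == j then x else 0).
  by rewrite -big_mkcond /= big_pred1_eq.
have Hm : forall i, (if i == j then x else 0) \in Vs i.
  by move=> i; case: eqP => [->|_]; rewrite ?mem0v.
split; first by rewrite {1}Hs dcomp_unique // eqxx.
by move=> i /negPf nij; rewrite Hs dcomp_unique // nij.
Qed.

End Decomp.


Section Metric.
Variables (R : realType) (V : vectType R) (mu : V -> V -> R).
Hypothesis Hm : is_metric mu.

Lemma mu_lin a u v w : mu (a *: u + v) w = a * mu u w + mu v w.
Proof. by case: Hm => H _ _; apply: H. Qed.
Lemma mu_sym u v : mu u v = mu v u.
Proof. by case: Hm => _ H _; apply: H. Qed.
Lemma mu_pos v : v != 0 -> 0 < mu v v.
Proof. by case: Hm => _ _ H; apply: H. Qed.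

Lemma muDl u v w : mu (u + v) w = mu u w + mu v w.
Proof. by rewrite -[u]scale1r mu_lin mul1r scale1r. Qed.
Lemma mu0l w : mu 0 w = 0.
Proof. have := muDl 0 0 w; rewrite addr0 => H. by apply: (addrI (mu 0 w)); rewrite addr0 -H. Qed.
Lemma muZl a u w : mu (a *: u) w = a * mu u w.
Proof. by rewrite -[a *: u]addr0 mu_lin mu0l addr0. Qed.
Lemma muNl u w : mu (- u) w = - mu u w.
Proof. by rewrite -scaleN1r muZl mulN1r. Qed.
Lemma muBl u v w : mu (u - v) w = mu u w - mu v w.
Proof. by rewrite muDl muNl. Qed.
Lemma muDr u v w : mu w (u + v) = mu w u + mu w v.
Proof. by rewrite !(mu_sym w) muDl. Qed.
Lemma muBr u v w : mu w (u - v) = mu w u - mu w v.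
Proof. by rewrite !(mu_sym w) muBl. Qed.
Lemma mu0r w : mu w 0 = 0.
Proof. by rewrite mu_sym mu0l. Qed.
Lemma musuml (J : Type) (r : seq J) (P : pred J) (F : J -> V) w :
  mu (\sum_(j <- r | P j) F j) w = \sum_(j <- r | P j) mu (F j) w.
Proof. exact: (big_morph (mu ^~ w) (fun u v => muDl u v w) (mu0l w)). Qed.
Lemma musumr (J : Type) (r : seq J) (P : pred J) (F : J -> V) w :
  mu w (\sum_(j <- r | P j) F j) = \sum_(j <- r | P j) mu w (F j).
Proof. by rewrite mu_sym musuml; apply: eq_bigr => j _; rewrite mu_sym. Qed.
Lemma mu_eq0 v : mu v v = 0 -> v = 0.
Proof. by move=> H; case: (eqVneq v 0) => // /mu_pos; rewrite H ltxx. Qed.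

Definition orthv (v : V) (S : {vspace V}) := forall s, s \in S -> mu v s = 0.

Lemma orthv_sum (J : finType) (P : pred J) (Ss : J -> {vspace V}) v :
  (forall j, P j -> orthv v (Ss j)) -> orthv v (\sum_(j | P j) Ss j)%VS.
Proof.
move=> H s /memv_sumP [ss Hss ->]; rewrite musumr big1 // => j Pj.
exact: H (Hss j Pj).
Qed.

Section Orth.
Variable S : {vspace V}.
Definition phiS (v : V) : 'rV[R]_(\dim S) := \row_t mu v (vbasis S)`_t.
Lemma phiS_lin : linear phiS.
Proof. by move=> a u v; apply/rowP => t; rewrite !mxE mu_lin. Qed.
HB.instance Definition _ := GRing.isLinear.Build R V 'rV[R]_(\dim S) *:%R phiS phiS_lin.

Definition orthS : {vspace V} := lker (linfun phiS).

Lemma orthS_orth v : v \in orthS -> orthv v S.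
Proof.
rewrite memv_ker lfunE /= => /eqP H s Hs.
rewrite (coord_vbasis Hs) musumr big1 // => t _.
rewrite mu_sym muZl mu_sym.
by move/rowP: H => /(_ t); rewrite !mxE => ->; rewrite mulr0.
Qed.

Lemma orthS_cap : (S :&: orthS = 0)%VS.
Proof.
apply/eqP; rewrite -subv0; apply/subvP => v; rewrite memv_cap memv0 => /andP[vS vO].
by apply/eqP/mu_eq0/(orthS_orth vO).
Qed.

Lemma orthS_full : (S + orthS)%VS = fullv.
Proof.
apply/eqP; rewrite eqEdim subvf /= dimv_disjoint_sum ?orthS_cap //.
have := limg_ker_dim (linfun phiS) fullv.
rewrite capfv -/orthS => H.
have : (\dim (linfun phiS @: fullv) <= \dim S)%N.
  apply: leq_trans (dimvS (subvf _)) _; by rewrite dimvf dim_matrix mul1r.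
by rewrite -H addnC leq_add2r.
Qed.

Definition oproj : 'End(V) := daddv_pi S orthS.

Lemma oproj_mem x : oproj x \in S.
Proof. exact: memv_pi. Qed.

Lemma oproj_orth x : orthv (x - oproj x) S.
Proof.
apply: orthS_orth.
have := daddv_pi_add (w := x) orthS_cap.
rewrite orthS_full memvf => /(_ isT) H.
by rewrite -{1}H /oproj addrC addKr memv_pi.
Qed.
End Orth.

Lemma oproj_stable (P A B Wv : {vspace V}) v :
  P = (A + B)%VS -> (A <= Wv)%VS -> (forall b, b \in B -> orthv b Wv) ->
  v \in Wv -> oproj P v \in Wv.
Proof.
move=> HP sAW oBW vW.
have h1 := oproj_orth (S:=P) v.
have := oproj_mem P v; move: h1; set p := oproj P v => h1; clearbody p; rewrite HP => /memv_addP [a Ha [b Hb Hp]].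
have bP : b \in P by rewrite HP -[b]add0r memv_add ?mem0v.
move/(_ b bP): h1 => h1.
have h2 : mu v b = 0 by rewrite mu_sym; apply: oBW.
have h3 : mu a b = 0 by rewrite mu_sym; apply: oBW => //; apply: (subvP sAW).
move: h1; rewrite muBl h2 sub0r => /eqP; rewrite oppr_eq0 => /eqP h4.
have : mu (a + b) b = 0 by rewrite -Hp.
rewrite muDl h3 add0r => /mu_eq0 b0.
by rewrite Hp b0 addr0; apply: (subvP sAW).
Qed.
End Metric.


Section Main.
Variables (R : realType) (V : vectType R) (mu : V -> V -> R).
Hypothesis Hm : is_metric mu.
Variables (I : finType) (Phi : {set I}) (W : I -> int -> {vspace V}).
Variables (n : nat) (f : 'I_n -> {ffun I -> int}) (A : 'I_n -> {vspace V}).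
Hypothesis dirA : directv (\sum_j A j).
Hypothesis fullA : (\sum_j A j)%VS = fullv.
Hypothesis WA : forall i k, W i k = (\sum_(j | (f j i <= k)%R) A j)%VS.
Variables (m : nat) (e : 'I_m -> {ffun I -> int}) (B : 'I_m -> {vspace V}).
Hypothesis dirB : directv (\sum_l B l).
Hypothesis fullB : (\sum_l B l)%VS = fullv.
Hypothesis WB : forall i, i \in Phi -> forall k, W i k = (\sum_(l | (e l i <= k)%R) B l)%VS.
Hypothesis orthB : forall i, i \in Phi -> forall k v,
  v \in (\sum_(l | e l i == k) B l)%VS -> in_orth_piece mu (W i) k v.

Definition sim (a b : {ffun I -> int}) : bool := [forall i in Phi, a i == b i].
Lemma sim_refl a : sim a a.
Proof. by apply/forall_inP. Qed.
Lemma sim_sym a b : sim a b = sim b a.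
Proof. by apply/forall_inP/forall_inP => H i /H /eqP ->. Qed.
Lemma sim_trans a b c : sim a b -> sim b c -> sim a c.
Proof. by move=> /forall_inP H1 /forall_inP H2; apply/forall_inP => i iP; rewrite (eqP (H1 i iP)) H2. Qed.

Notation cA := (dcomp A).
Notation cB := (dcomp B).

Lemma memB_W i l k x : i \in Phi -> x \in B l -> e l i <= k -> x \in W i k.
Proof. by move=> iP xB lk; rewrite (WB iP); apply: (subvP (sumv_sup l lk (subvv _))). Qed.

Lemma orthB1 i l x y : i \in Phi -> x \in B l -> y \in W i (e l i - 1) -> mu x y = 0.
Proof.
move=> iP xB yW.
have [_ H] := orthB iP (k := e l i) (v := x) (subvP (sumv_sup (P := fun l' => e l' i == e l i) l (eqxx _) (subvv _)) _ xB).
exact: H.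
Qed.

Lemma orthB2 l l' x y : x \in B l -> y \in B l' -> ~~ sim (e l) (e l') -> mu x y = 0.
Proof.
move=> xB yB /forall_inPn [i iP neq].
case: (ltgtP (e l i) (e l' i)) neq => // H _.
  by rewrite (mu_sym Hm); apply: (orthB1 iP yB); apply: (memB_W iP xB); lia.
by apply: (orthB1 iP xB); apply: (memB_W iP yB); lia.
Qed.

Definition Cbar c := (\sum_(l | sim (e l) c) B l)%VS.
Definition piC c : 'End(V) := \sum_(l | sim (e l) c) cB l.

Lemma CbarE c c' : sim c c' -> Cbar c = Cbar c'.
Proof.
move=> s; apply: eq_bigl => l; apply/idP/idP => H; first exact: sim_trans H s.
by apply: sim_trans H _; rewrite sim_sym.
Qed.
Lemma piCE c c' : sim c c' -> piC c = piC c'.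
Proof.
move=> s; apply: eq_bigl => l; apply/idP/idP => H; first exact: sim_trans H s.
by apply: sim_trans H _; rewrite sim_sym.
Qed.

Lemma Cbar_orth c c' a b : a \in Cbar c -> b \in Cbar c' -> ~~ sim c c' -> mu a b = 0.
Proof.
move=> /memv_sumP [as_ Has ->] /memv_sumP [bs Hbs ->] ns.
rewrite (musuml Hm) big1 // => l sl; rewrite (musumr Hm) big1 // => l' sl'.
apply: orthB2 (Has l sl) (Hbs l' sl') _; apply: contra ns => H.
apply: sim_trans sl'; apply: sim_trans H; by rewrite sim_sym.
Qed.

Lemma piC_mem c x : piC c x \in Cbar c.
Proof. by rewrite sum_lfunE; apply: memv_sumr => l _; apply: dcomp_mem. Qed.

Lemma piC_Cbar c c' y : y \in Cbar c' -> piC c y = if sim c' c then y else 0.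
Proof.
move=> /(dcomp_mem_sum dirB fullB) Hy; rewrite sum_lfunE.
case: ifP => s.
  rewrite -{2}(dcomp_sum fullB y) [RHS](bigID (fun l => sim (e l) c)) /= [X in _ = _ + X]big1 ?addr0 //.
  move=> l nl; apply: Hy; apply: contra nl => H; exact: sim_trans H s.
apply: big1 => l sl; apply: Hy; apply/negP => H; move/negP: s; apply; apply: sim_trans sl.
by rewrite sim_sym.
Qed.

Lemma crux c X : X \in (\sum_(j | sim (f j) c) A j)%VS -> piC c X = 0 -> X = 0.
Proof.
move=> HX H0.
have HXc := HX; move/(dcomp_mem_sum dirA fullA): HXc => HXc.
have XW : forall i, i \in Phi -> X \in W i (c i).
  move=> i iP; rewrite WA; apply: (subvP _ _ HX); apply/subv_sumP => j sj.
  by apply: sumv_sup (subvv _); have /forall_inP/(_ i iP)/eqP -> := sj.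
rewrite -(dcomp_sum fullA X) big1 // => j' _.
case sj': (sim (f j') c); last by apply: HXc; rewrite sj'.
rewrite -{1}(dcomp_sum fullB X) linear_sum /= (bigID (fun l => sim (e l) c)) /=.
rewrite -linear_sum /= -sum_lfunE -/(piC c) H0 linear0 add0r big1 // => l nl.
case: (eqVneq (cB l X) 0) => [->|nz]; first exact: linear0.
have le : forall i, i \in Phi -> e l i <= c i.
  move=> i iP; have := XW i iP; rewrite (WB iP) => /(dcomp_mem_sum dirB fullB)/(_ l).
  by case: (e l i <= c i) => //; move/(_ isT) => H; rewrite H eqxx in nz.
move/forall_inPn: nl => [i0 iP neq].
have lt : e l i0 < c i0 by rewrite lt_neqAle neq le.
have : cB l X \in W i0 (e l i0) by apply: memB_W (dcomp_mem _ _ _) _.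
rewrite WA => /(dcomp_mem_sum dirA fullA)/(_ j'); apply.
by have /forall_inP/(_ i0 iP)/eqP -> := sj'; rewrite -ltNge.
Qed.

Definition h : 'End(V) := \sum_j (piC (f j) \o cA j)%VF.

Lemma hE x : h x = \sum_j piC (f j) (cA j x).
Proof. by rewrite sum_lfunE; apply: eq_bigr => j _; rewrite comp_lfunE. Qed.

Lemma h_A j x : x \in A j -> h x = piC (f j) x.
Proof.
move=> /(dcomp_id dirA fullA) [H1 H2]; rewrite hE (bigD1 j) //= H1 big1 ?addr0 //.
by move=> j' nj; rewrite H2 // linear0.
Qed.

Lemma h_inj x : h x = 0 -> x = 0.
Proof.
move=> hx0.
suff H : forall j0, cA j0 x = 0.
  by rewrite -(dcomp_sum fullA x) big1 // => j _; exact: H.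
move=> j0; pose X := \sum_(j | sim (f j) (f j0)) cA j x.
have XA : X \in (\sum_(j | sim (f j) (f j0)) A j)%VS.
  by apply: memv_sumr => j _; apply: dcomp_mem.
have : piC (f j0) X = 0.
  rewrite -(linear0 (piC (f j0))) -hx0 hE !linear_sum /= [RHS](bigID (fun j => sim (f j) (f j0))) /=.
  rewrite [X in _ = _ + X]big1 ?addr0.
    by apply: eq_bigr => j sj; rewrite (piC_Cbar _ (piC_mem (f j) _)) sj (piCE sj).
  by move=> j nj; rewrite (piC_Cbar _ (piC_mem (f j) _)) (negPf nj).
move/(crux XA) => X0.
have : cA j0 X = cA j0 x.
  rewrite /X big_mkcond /= dcomp_unique ?sim_refl // => j.
  by case: ifP => _; rewrite ?mem0v ?dcomp_mem.
by rewrite X0 linear0.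
Qed.

Definition Q (j : 'I_n) := (\sum_(j' : 'I_n | (j' < j)%N) (h @: A j'))%VS.
Definition g : 'End(V) := \sum_j ((\1 - oproj mu (Q j)) \o h \o cA j)%VF.
Definition Y j := (g @: A j)%VS.

Lemma gE x : g x = \sum_j (h (cA j x) - oproj mu (Q j) (h (cA j x))).
Proof.
rewrite sum_lfunE; apply: eq_bigr => j _.
by rewrite !comp_lfunE add_lfunE opp_lfunE id_lfunE.
Qed.

Lemma g_A j x : x \in A j -> g x = h x - oproj mu (Q j) (h x).
Proof.
move=> /(dcomp_id dirA fullA) [H1 H2]; rewrite gE (bigD1 j) //= H1 big1 ?addr0 //.
by move=> j' nj; rewrite H2 // !linear0 ?subr0 ?subrr ?addr0.
Qed.

Lemma hA_Cbar j y : y \in (h @: A j)%VS -> y \in Cbar (f j).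
Proof. by case/memv_imgP => x Hx ->; rewrite (h_A Hx) piC_mem. Qed.

Lemma Y_Cbar j y : y \in Y j -> y \in Cbar (f j).
Proof.
case/memv_imgP => x Hx ->; rewrite (g_A Hx).
have hx : h x \in Cbar (f j) by rewrite (h_A Hx) piC_mem.
rewrite memvB // (oproj_stable Hm (A := (\sum_(j' : 'I_n | ((j' < j)%N) && sim (f j') (f j)) (h @: A j'))%VS)
   (B := (\sum_(j' : 'I_n | ((j' < j)%N) && ~~ sim (f j') (f j)) (h @: A j'))%VS)) //.
- by rewrite /Q (bigID (fun j' => sim (f j') (f j))).
- apply/subv_sumP => j' /andP [_ sj]; apply/subvP => z /hA_Cbar.
  by rewrite (CbarE sj).
move=> b /memv_sumP [bs Hbs ->] s Hs; rewrite (musuml Hm) big1 // => j' /andP [lt nj].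
by apply: (Cbar_orth (hA_Cbar (Hbs j' (introT andP (conj lt nj)))) Hs).
Qed.

Lemma Q_mono (j j' : 'I_n) : (j' <= j)%N -> (Q j' <= Q j)%VS.
Proof.
move=> le; apply/subv_sumP => j'' lt; apply: sumv_sup (subvv _).
exact: leq_trans lt le.
Qed.

Lemma Y_sub (j j' : 'I_n) : (j' < j)%N -> (Y j' <= Q j)%VS.
Proof.
move=> lt; apply/subvP => y /memv_imgP [x Hx ->]; rewrite (g_A Hx) memvB //.
  by apply: (subvP (sumv_sup (P := fun j'' : 'I_n => (j'' < j)%N) j' lt (subvv _))); apply: memv_img.
by apply: (subvP (Q_mono (ltnW lt))); apply: oproj_mem.
Qed.

Lemma Y_orthQ (j : 'I_n) y z : y \in Y j -> z \in Q j -> mu y z = 0.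
Proof. by case/memv_imgP => x Hx -> Hz; rewrite (g_A Hx); apply: (oproj_orth Hm). Qed.

Lemma Y_orth (j j' : 'I_n) y y' : j != j' -> y \in Y j -> y' \in Y j' -> mu y y' = 0.
Proof.
move=> nj Hy Hy'; case: (ltngtP j j') => [lt|lt|/val_inj eq]; last by rewrite eq eqxx in nj.
  by rewrite (mu_sym Hm); apply: Y_orthQ Hy' _; apply: (subvP (Y_sub lt)).
by apply: Y_orthQ Hy _; apply: (subvP (Y_sub lt)).
Qed.

Lemma orth_family (ys : 'I_n -> V) : (forall j, ys j \in Y j) -> \sum_j ys j = 0 ->
  forall j, ys j = 0.
Proof.
move=> Hy s0 j; apply: (mu_eq0 Hm).
have : mu (\sum_j ys j) (ys j) = 0 by rewrite s0 (mu0l Hm).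
rewrite (musuml Hm) (bigD1 j) //= big1 ?addr0 // => j' nj.
by apply: Y_orth (Hy j') (Hy j).
Qed.

Lemma g_inj x : g x = 0 -> x = 0.
Proof.
move=> gx0.
suff H : forall j, cA j x = 0.
  by rewrite -(dcomp_sum fullA x) big1 // => j _; exact: H.
have gs : \sum_j g (cA j x) = 0 by rewrite -linear_sum /= dcomp_sum.
have H := orth_family (fun j => memv_img g (dcomp_mem A j x)) gs.
move=> j; move: (H j); rewrite (g_A (dcomp_mem A j x)) => /eqP; rewrite subr_eq0 => /eqP E.
have : h (cA j x) \in (h @: (\sum_(j' : 'I_n | (j' < j)%N) A j'))%VS.
  by rewrite limg_sum E oproj_mem.
case/memv_imgP => z Hz Ez.
have xz : cA j x = z by apply/eqP; rewrite -subr_eq0; apply/eqP/h_inj; rewrite linearB /= Ez subrr.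
have [H1 _] := dcomp_id dirA fullA (dcomp_mem A j x).
rewrite -H1 xz; apply: (elimT (dcomp_mem_sum dirA fullA _ _) Hz).
by rewrite ltnn.
Qed.

Lemma g_ker : lker g == 0%VS.
Proof.
rewrite -subv0; apply/subvP => x; rewrite memv_ker memv0 => /eqP /g_inj ->.
by rewrite eqxx.
Qed.

Lemma gW i k : i \in Phi -> (g @: W i k)%VS = W i k.
Proof.
move=> iP; apply/eqP; rewrite eqEdim limg_dim_eq ?(eqP g_ker) ?capv0 // leqnn andbT.
rewrite {1}WA limg_sum; apply/subv_sumP => j le; apply/subvP => y /Y_Cbar.
case/memv_sumP => ys Hys ->; apply: rpred_sum => l sl.
apply: (memB_W iP (Hys l sl)).
by have /forall_inP/(_ i iP)/eqP -> := sl.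
Qed.

Lemma Y_dir : directv (\sum_j Y j).
Proof.
apply/directv_sum_independent => ys Hys s0 j _.
exact: (orth_family (fun j => Hys j isT) s0).
Qed.

Lemma Y_full : (\sum_j Y j)%VS = fullv.
Proof. by rewrite /Y -limg_sum fullA lker0_limgf // g_ker. Qed.

Lemma Y_subsum (P P' : pred 'I_n) : (forall j, P j -> P' j) ->
  (\sum_(j | P j) Y j <= \sum_(j | P' j) Y j)%VS.
Proof. by move=> H; apply/subv_sumP => j Pj; apply: sumv_sup (H j Pj) (subvv _). Qed.

Lemma Y_orth_sums (P P' : pred 'I_n) a b : (forall j, P j -> P' j -> False) ->
  a \in (\sum_(j | P j) Y j)%VS -> b \in (\sum_(j | P' j) Y j)%VS -> mu a b = 0.
Proof.
move=> D /memv_sumP [as_ Ha ->] /memv_sumP [bs Hb ->].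
rewrite (musuml Hm) big1 // => j Pj; rewrite (musumr Hm) big1 // => j' Pj'.
apply: Y_orth (Ha j Pj) (Hb j' Pj'); apply/eqP => ej; rewrite ej in Pj.
exact: D Pj Pj'.
Qed.

Lemma gWE i k : (g @: W i k)%VS = (\sum_(j | (f j i <= k)%R) Y j)%VS.
Proof. by rewrite WA limg_sum. Qed.

Lemma Y_piece i k v : v \in (\sum_(j | f j i == k) Y j)%VS <->
  in_orth_piece mu (fun k => (g @: W i k)%VS) k v.
Proof.
rewrite /in_orth_piece !gWE; split.
  move=> Hv; split; first by apply: (subvP (Y_subsum _)) Hv => j /eqP ->.
  move=> u Hu; apply: Y_orth_sums Hv Hu => j /eqP -> ; lia.
case=> Hv Ho; move: Hv => /memv_sumP [vs Hvs Ev].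
have Hb : \sum_(j | (f j i <= k)%R && (f j i != k)) vs j \in
    (\sum_(j | (f j i <= k - 1)%R) Y j)%VS.
  apply: (subvP (Y_subsum (P := fun j => (f j i <= k)%R && (f j i != k)) _)).
    by move=> j /andP [le ne]; lia.
  by apply: memv_sumr => j /andP [le _]; apply: Hvs.
have Ha : \sum_(j | (f j i <= k)%R && (f j i == k)) vs j \in
    (\sum_(j | (f j i <= k)%R && (f j i == k)) Y j)%VS.
  by apply: memv_sumr => j /andP [le _]; apply: Hvs.
have Ev2 := Ev; rewrite (bigID (fun j => f j i == k)) /= in Ev2.
have h1 := Ho _ Hb; rewrite Ev2 muDl // in h1.
have h2 : mu (\sum_(j | (f j i <= k)%R && (f j i == k)) vs j)
              (\sum_(j | (f j i <= k)%R && (f j i != k)) vs j) = 0.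
  by apply: Y_orth_sums Ha Hb => j /andP [_ /eqP ->]; lia.
rewrite h2 add0r in h1; move/(mu_eq0 Hm): h1 => b0.
rewrite Ev2 b0 addr0; apply: (subvP (Y_subsum _)) Ha.
by move=> j /andP [].
Qed.

End Main.

Lemma seq2ord (R : realType) (V : vectType R) (T : Type) (r : seq T) (x0 : T) (P : pred T)
  (F : T -> {vspace V}) :
  (\sum_(w <- r | P w) F w)%VS = (\sum_(j < size r | P (nth x0 r j)) F (nth x0 r j))%VS.
Proof. by rewrite (big_nth x0) big_mkord. Qed.

Lemma dir2ord (R : realType) (V : vectType R) (T : Type) (r : seq T) (x0 : T)
  (F : T -> {vspace V}) :
  directv (\sum_(w <- r) F w) -> directv (\sum_(j < size r) F (nth x0 r j)).
Proof.
move/directvP => /= H; apply/directvP => /=.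
have E2 : (\sum_(i < size r) \dim (F (nth x0 r i)) = \sum_(i <- r) \dim (F i))%N.
  by rewrite (big_nth x0) big_mkord.
by rewrite E2 -H (seq2ord _ x0).
Qed.

Lemma ord2dir (R : realType) (V : vectType R) (T : Type) (r : seq T) (x0 : T)
  (F : T -> {vspace V}) :
  directv (\sum_(j < size r) F (nth x0 r j)) -> directv (\sum_(w <- r) F w).
Proof.
move/directvP => /= H; apply/directvP => /=.
have E2 : (\sum_(i < size r) \dim (F (nth x0 r i)) = \sum_(i <- r) \dim (F i))%N.
  by rewrite (big_nth x0) big_mkord.
by rewrite -E2 -H (seq2ord _ x0).
Qed.


End Aux.
Import Aux.

Theorem proposition4p6p12 (R : realType) (V : vectType R) (mu : V -> V -> R)
    (I : finType) (W : I -> int -> {vspace V}) (Phi : {set I}) :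
  is_metric mu ->
  (forall i, is_filtration (W i)) ->
  (forall i j, (forall k, W i k = W j k) -> i = j) ->
  has_compatible_splitting [set: I] W ->
  gives_compatible_splittings mu Phi W ->
  exists g : 'End(V),
    bijective g /\
    (forall i, i \in Phi -> forall k : int, (g @: W i k)%VS = W i k) /\
    gives_compatible_splittings mu [set: I] (fun i k => (g @: W i k)%VS).
Proof.
move=> Hm _ _ [ws [Vw [uA dA fA WA]]] [ws2 [Vw2 [[_ dB fB WB] oB]]].
pose w0 : {ffun I -> int} := [ffun=> 0].
pose f (j : 'I_(size ws)) := nth w0 ws j.
pose A j := Vw (f j).
pose e (l : 'I_(size ws2)) := nth w0 ws2 l.
pose B l := Vw2 (e l).
have dirA : directv (\sum_j A j) by exact: dir2ord.
have fullA : (\sum_j A j)%VS = fullv by rewrite -fA (seq2ord _ w0).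
have WA' : forall i k, W i k = (\sum_(j | (f j i <= k)%R) A j)%VS.
  by move=> i k; rewrite WA ?inE // (seq2ord _ w0).
have dirB : directv (\sum_l B l) by exact: dir2ord.
have fullB : (\sum_l B l)%VS = fullv by rewrite -fB (seq2ord _ w0).
have WB' : forall i, i \in Phi -> forall k, W i k = (\sum_(l | (e l i <= k)%R) B l)%VS.
  by move=> i iP k; rewrite WB // (seq2ord _ w0).
have oB' : forall i, i \in Phi -> forall k v,
    v \in (\sum_(l | e l i == k) B l)%VS -> in_orth_piece mu (W i) k v.
  by move=> i iP k v Hv; apply/(oB i iP k v); rewrite (seq2ord _ w0).
set g := g mu Phi f A e B.
have gk := g_ker Hm dirA fullA WA' dirB fullB WB'.
exists g; split; first by exists (g^-1)%VF; [apply: lker0_lfunK | apply: lker0_lfunVK].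
split; first by move=> i iP k; apply: (gW Hm dirA fullA WA' dirB fullB WB' oB').
exists ws, (fun w => (g @: Vw w)%VS); split; [split|].
- exact: uA.
- apply: (ord2dir (x0 := w0) (F := fun w => (g @: Vw w)%VS)). exact: (Y_dir Hm Phi f dirA fullA e B).
- by rewrite -limg_sum fA lker0_limgf.
- by move=> i _ k; rewrite WA ?inE // limg_sum.
- move=> i _ k v; rewrite (seq2ord _ w0).
  exact: (Y_piece Hm Phi dirA fullA WA' e dirB).
Qed.
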